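(* Let $G=(\mathfrak{N},\mathfrak{T},\mathfrak{R},\mathfrak{S})$ be a context-free grammar, $\Sigma$ a set of characters, $(\textsl{Lex},\textsl{Sel})$ a local lexing with respect to $\mathfrak{T}$ and $\Sigma$, and $D\in\Sigma^*$. Then Earley's algorithm with local lexing is sound and complete: \[ D\in\mathcal{L}_\Sigma \quad\Longleftrightarrow\quad \exists\,\alpha.\ (\mathfrak{S}\rightarrow\alpha\,\bullet,\,0,\,|D|)\in\mathfrak{I}, \] where $\mathcal{L}_\Sigma=\{D\in\Sigma^*\mid \ell\ell(D)\neq\emptyset\}$ and $\ell\ell(D)$ and $\mathfrak{I}$ are as defined in the context.
   Context: Notation: for a set $U$, $U^*$ is the set of finite sequences over $U$, $\varepsilon$ the empty sequence, juxtaposition is concatenation, $|\alpha|$ the length and $\alpha_i$ ($0\le i<|\alpha|$) the $i$-th element. A context-free grammar $(\mathfrak{N},\mathfrak{T},\mathfrak{R},\mathfrak{S})$ has disjoint nonterminals $\mathfrak{N}$ and terminals $\mathfrak{T}$, rules $\mathfrak{R}\subseteq\mathfrak{N}\times(\mathfrak{N}\cup\mathfrak{T})^*$ (written $N\rightarrow\alpha$), start symbol $\mathfrak{S}$; $\alpha\Rightarrow\beta$ iff $\alpha=\alpha_0N\alpha_1$, $\beta=\alpha_0\gamma\alpha_1$ with $N\rightarrow\gamma$; $\overset{*}{\Rightarrow}$ is its reflexive-transitive closure. $\mathcal{L}=\{w\in\mathfrak{T}^*\mid\mathfrak{S}\overset{*}{\Rightarrow}w\}$ and $\mathcal{L}_{\text{prefix}}=\{w\in\mathfrak{T}^*\mid\exists\alpha\in(\mathfrak{N}\cup\mathfrak{T})^*.\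 \mathfrak{S}\overset{*}{\Rightarrow}w\alpha\}$. Tokens: a token is a pair $x=(t,c)\in\mathfrak{T}\times\Sigma^*$; $[x]=t$, $\overline{x}=c$; it is empty iff $|c|=0$. For a token sequence (path) $q=x_0\ldots x_r$, $[q]=[x_0]\ldots[x_r]\in\mathfrak{T}^*$ and $\overline{q}=\overline{x_0}\ldots\overline{x_r}\in\Sigma^*$. Local lexing: a pair $(\textsl{Lex},\textsl{Sel})$ where $\textsl{Lex}$ assigns to each $t\in\mathfrak{T}$ a function $\textsl{Lex}(t)$ which, given $D\in\Sigma^*$ and $k\in\{0,\ldots,|D|\}$, returns a set of tokens $(t,c)$ with $k+|c|\le|D|$ and $c_i=D_{k+i}$ for $0\le i\le|c|-1$; and $\textsl{Sel}$ maps any two token sets $A\subseteq B$ to a token set $\textsl{Sel}(A,B)$ with $A\subseteq\textsl{Sel}(A,B)\subseteq B$. Semantics: $\operatorname{limit} f\,X=\bigcup_{n\ge0}f^n(X)$. $\operatorname{Append}_k\,T\,P=P\cup\{pt\mid p\in P,\ |\overline{p}|=k,\ t\in T,\ [pt]\in\mathcal{L}_{\text{prefix}}\}$. For $k\in\{0,\ldots,|D|\}$: $\mathcal{X}_k=\{x\in\mathfrak{T}\times\Sigma^*\mid x\in\textsl{Lex}([x])(D,k)\}$; $\mathcal{P}_0^0=\{\varepsilon\}$; $\mathcal{W}_k^u=\{x\in\mathcal{X}_k\mid\exists p\in\mathcal{P}_k^u.\ |\overline{p}|=k\wedge[px]\in\mathcal{L}_{\text{prefix}}\}$; $\mathcal{Z}_k^0=\emptyset$;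 $\mathcal{Z}_k^{u+1}=\textsl{Sel}(\mathcal{Z}_k^u,\mathcal{W}_k^u)$; $\mathcal{P}_k^{u+1}=\operatorname{limit}(\operatorname{Append}_k\,\mathcal{Z}_k^{u+1})\,\mathcal{P}_k^u$; $\mathcal{P}_k^\infty=\bigcup_u\mathcal{P}_k^u$; $\mathcal{P}_{k+1}^0=\mathcal{P}_k^\infty$. Finally $\mathfrak{P}=\mathcal{P}_{|D|}^\infty$ and $\ell\ell(D)=\{p\in\mathfrak{P}\mid|\overline{p}|=|D|\wedge[p]\in\mathcal{L}\}$. Earley items: an item is $(N\rightarrow\alpha\bullet\beta,i,j)$ with $(N\rightarrow\alpha\beta)\in\mathfrak{R}$, $0\le i\le j\le|D|$. For item sets $I$, token sets $T$, position $k$: $\operatorname{Init}=\{(\mathfrak{S}\rightarrow\bullet\alpha,0,0)\mid\mathfrak{S}\rightarrow\alpha\in\mathfrak{R}\}$; $\operatorname{Predict}\,k\,I=I\cup\{(M\rightarrow\bullet\gamma,k,k)\mid\exists N,\alpha,\beta,i.\ (N\rightarrow\alpha\bullet M\beta,i,k)\in I\wedge(M\rightarrow\gamma)\in\mathfrak{R}\}$; $\operatorname{Complete}\,k\,I=I\cup\{(N\rightarrow\alpha M\bullet\beta,i,k)\mid\exists j,\gamma.\ (N\rightarrow\alpha\bullet M\beta,i,j)\in I\wedge(M\rightarrow\gamma\bullet,j,k)\in I\}$; $\operatorname{Tokens}\,T\,k\,I=\textsl{Sel}\big(T,\{x\mid\exists X\in\mathfrak{T},N,\alpha,\beta,i.\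 (N\rightarrow\alpha\bullet X\beta,i,k)\in I\wedge x\in\textsl{Lex}(X)(D,k)\}\big)$; $\operatorname{Scan}\,T\,k\,I=I\cup\{(N\rightarrow\alpha X\bullet\beta,i,k+|c|)\mid(X,c)\in T\wedge(N\rightarrow\alpha\bullet X\beta,i,k)\in I\}$; $\pi_k\,T\,I=\operatorname{limit}(\operatorname{Scan}\,T\,k\circ\operatorname{Complete}\,k\circ\operatorname{Predict}\,k)\,I$. Then $\mathcal{J}_0^0=\pi_0\,\emptyset\,\operatorname{Init}$; $\mathcal{T}_k^0=\emptyset$; $\mathcal{T}_k^{u+1}=\operatorname{Tokens}\,\mathcal{T}_k^u\,k\,\mathcal{J}_k^u$; $\mathcal{J}_k^{u+1}=\pi_k\,\mathcal{T}_k^{u+1}\,\mathcal{J}_k^u$; $\mathcal{I}_k=\bigcup_u\mathcal{J}_k^u$; $\mathcal{J}_{k+1}^0=\pi_{k+1}\,\emptyset\,\mathcal{I}_k$; and $\mathfrak{I}=\mathcal{I}_{|D|}$. *)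

(* Defs.v *)
From mathcomp Require Import all_boot.
From Stdlib Require Import Relations.

Set Implicit Arguments.
Unset Strict Implicit.
Unset Printing Implicit Defensive.

Inductive symbol (N T : Type) : Type :=
| Nt : N -> symbol N T
| Tm : T -> symbol N T.
Arguments Nt {N T} _.
Arguments Tm {N T} _.

Section LocalLexing.
Context {N T Sigma : Type}.
(* rules  R N alpha  <->  (N -> alpha) is a rule; S is the start symbol *)
Variable R : N -> seq (symbol N T) -> Prop.
Variable S : N.

Definition derives1 (a b : seq (symbol N T)) : Prop :=
  exists a0 a1 M g, R M g /\ a = a0 ++ Nt M :: a1 /\ b = a0 ++ g ++ a1.
Definition derives := clos_refl_trans _ derives1.

Definition lang (w : seq T) : Prop := derives [:: Nt S] (map Tm w).
Definition lang_prefix (w : seq T) : Prop :=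
  exists alpha, derives [:: Nt S] (map Tm w ++ alpha).

Definition token := (T * seq Sigma)%type.
Definition path := seq token.
Definition terms (q : path) : seq T := map fst q.
Definition chars (q : path) : seq Sigma := flatten (map snd q).

Definition lexer := T -> seq Sigma -> nat -> token -> Prop.
Definition selector := (token -> Prop) -> (token -> Prop) -> (token -> Prop).

Definition is_lexer (Lex : lexer) : Prop :=
  forall t D k, k <= size D -> forall x, Lex t D k x ->
    x.1 = t /\ k + size x.2 <= size D /\
    (forall i (x0 : Sigma), i < size x.2 -> nth x0 x.2 i = nth x0 D (k + i)).

Definition is_selector (Sel : selector) : Prop :=
  forall A B : token -> Prop, (forall x, A x -> B x) ->
    (forall x, A x -> Sel A B x) /\ (forall x, Sel A B x -> B x).

Definition limit {X : Type} (f : (X -> Prop) -> (X -> Prop)) (A : X -> Prop) : X -> Prop :=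
  fun x => exists n, iter n f A x.

Variable Lex : lexer.
Variable Sel : selector.
Variable D : seq Sigma.

Definition Append (k : nat) (Z : token -> Prop) (P : path -> Prop) : path -> Prop :=
  fun q => P q \/ exists p t, P p /\ size (chars p) = k /\ Z t /\
             lang_prefix (terms (rcons p t)) /\ q = rcons p t.

Definition Xk (k : nat) : token -> Prop := fun x => Lex x.1 D k x.

Definition Wk (k : nat) (P : path -> Prop) : token -> Prop :=
  fun x => Xk k x /\ exists p, P p /\ size (chars p) = k /\ lang_prefix (terms (rcons p x)).

(* (Z_k^u, P_k^u) -> (Z_k^{u+1}, P_k^{u+1}) *)
Definition ll_step (k : nat) (ZP : (token -> Prop) * (path -> Prop))
  : (token -> Prop) * (path -> Prop) :=
  let Z' := Sel ZP.1 (Wk k ZP.2) in (Z', limit (Append k Z') ZP.2).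

Fixpoint P0 (k : nat) : path -> Prop :=
  match k with
  | 0 => fun p => p = [::]
  | k'.+1 => fun p => exists u, (iter u (ll_step k') (fun _ => False, P0 k')).2 p
  end.
Definition Pu (k u : nat) : path -> Prop := (iter u (ll_step k) (fun _ => False, P0 k)).2.
Definition Pinf (k : nat) : path -> Prop := fun p => exists u, Pu k u p.

Definition frakP : path -> Prop := Pinf (size D).
Definition ll : path -> Prop :=
  fun p => frakP p /\ size (chars p) = size D /\ lang (terms p).

(* (lhs -> before . after, origin, end) *)
Definition item := (N * seq (symbol N T) * seq (symbol N T) * nat * nat)%type.

Definition Init : item -> Prop :=
  fun it => exists alpha, R S alpha /\ it = (S, [::], alpha, 0, 0).

Definition Predict (k : nat) (I : item -> Prop) : item -> Prop :=
  fun it => I it \/ exists M0 alpha M beta i gamma,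
    I (M0, alpha, Nt M :: beta, i, k) /\ R M gamma /\ it = (M, [::], gamma, k, k).

Definition Complete (k : nat) (I : item -> Prop) : item -> Prop :=
  fun it => I it \/ exists M0 alpha M beta i j gamma,
    I (M0, alpha, Nt M :: beta, i, j) /\ I (M, gamma, [::], j, k) /\
    it = (M0, rcons alpha (Nt M), beta, i, k).

Definition Tokens (Tk : token -> Prop) (k : nat) (I : item -> Prop) : token -> Prop :=
  Sel Tk (fun x => exists X M0 alpha beta i,
            I (M0, alpha, Tm X :: beta, i, k) /\ Lex X D k x).

Definition Scan (Tk : token -> Prop) (k : nat) (I : item -> Prop) : item -> Prop :=
  fun it => I it \/ exists X c M0 alpha beta i,
    Tk (X, c) /\ I (M0, alpha, Tm X :: beta, i, k) /\
    it = (M0, rcons alpha (Tm X), beta, i, k + size c).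

Definition pi (k : nat) (Tk : token -> Prop) (I : item -> Prop) : item -> Prop :=
  limit (fun J => Scan Tk k (Complete k (Predict k J))) I.

(* (T_k^u, J_k^u) -> (T_k^{u+1}, J_k^{u+1}) *)
Definition earley_step (k : nat) (TJ : (token -> Prop) * (item -> Prop))
  : (token -> Prop) * (item -> Prop) :=
  let T' := Tokens TJ.1 k TJ.2 in (T', pi k T' TJ.2).

Fixpoint J0 (k : nat) : item -> Prop :=
  match k with
  | 0 => pi 0 (fun _ => False) Init
  | k'.+1 => pi k'.+1 (fun _ => False)
               (fun it => exists u, (iter u (earley_step k') (fun _ => False, J0 k')).2 it)
  end.
Definition Ju (k u : nat) : item -> Prop := (iter u (earley_step k) (fun _ => False, J0 k)).2.
Definition Ik (k : nat) : item -> Prop := fun it => exists u, Ju k u it.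

Definition frakI : item -> Prop := Ik (size D).

End LocalLexing.

(* Main.v *)
Require Import Defs.
From mathcomp Require Import all_boot.
From mathcomp Require Import zify.
From Stdlib Require Import Relations FunctionalExtensionality PropExtensionality.

Set Implicit Arguments.
Unset Strict Implicit.
Unset Printing Implicit Defensive.

Section Chains.
Variables (T Sigma : Type).
Local Notation tok := (T * seq Sigma)%type.
Fixpoint chainV (V : nat -> tok -> Prop) (j : nat) (q : seq tok) : Prop :=
  match q with [::] => True | x :: q' => V j x /\ chainV V (j + size x.2) q' end.

Definition chs (q : seq tok) := size (@chars T Sigma q).

Lemma chs_cons x q : chs (x :: q) = size x.2 + chs q.
Proof. by rewrite /chs /chars /= size_cat. Qed.
Lemma chs_cat q1 q2 : chs (q1 ++ q2) = chs q1 + chs q2.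
Proof. by rewrite /chs /chars map_cat flatten_cat size_cat. Qed.
Lemma chs_nil : chs [::] = 0. Proof. by []. Qed.
Lemma chs_rcons q x : chs (rcons q x) = chs q + size x.2.
Proof. by rewrite -cats1 chs_cat chs_cons chs_nil addn0. Qed.

Lemma chainV_cat V j q1 q2 :
  chainV V j (q1 ++ q2) <-> chainV V j q1 /\ chainV V (j + chs q1) q2.
Proof.
elim: q1 j => [|x q1 IH] j /=; first by rewrite chs_nil addn0; tauto.
rewrite IH chs_cons addnA; tauto.
Qed.

Lemma chainV_rcons V j q x :
  chainV V j (rcons q x) <-> chainV V j q /\ V (j + chs q) x.
Proof. rewrite -cats1 chainV_cat /=; tauto. Qed.

Lemma chainV_mono (V V' : nat -> tok -> Prop) j q :
  (forall j x, V j x -> V' j x) -> chainV V j q -> chainV V' j q.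
Proof. move=> H; elim: q j => [|x q IH] j //= [h1 h2]; split; auto. Qed.

Lemma chainV_restrict (V V' : nat -> tok -> Prop) j q m :
  (forall j' x, j' <= m -> V j' x -> V' j' x) -> j + chs q <= m ->
  chainV V j q -> chainV V' j q.
Proof.
move=> H; elim: q j => [|x q IH] j //=; rewrite chs_cons => hm [h1 h2]; split.
- apply: H h1; lia.
- apply: IH h2; lia.
Qed.

Lemma chainV_stage (V : nat -> nat -> tok -> Prop) j q :
  (forall u u' j x, u <= u' -> V u j x -> V u' j x) ->
  chainV (fun j x => exists u, V u j x) j q -> exists u, chainV (V u) j q.
Proof.
move=> Hm; elim: q j => [|x q IH] j /=; first by exists 0.
case=> [[u1 h1] /IH [u2 h2]]; exists (maxn u1 u2); split.
- apply: Hm h1; lia.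
- apply: chainV_mono h2 => j' y; apply: Hm; lia.
Qed.

End Chains.

Section G.
Variables (N T Sigma : Type) (R : N -> seq (symbol N T) -> Prop) (S : N).
Local Notation sym := (symbol N T).
Local Notation tok := (T * seq Sigma)%type.
Local Notation der := (derives R).
Local Notation itm := (N * seq sym * seq sym * nat * nat)%type.

Lemma der_refl a : der a a. Proof. exact: rt_refl. Qed.
Lemma der_trans a b c : der a b -> der b c -> der a c.
Proof. exact: rt_trans. Qed.
Lemma der_ctx x y a b : der a b -> der (x ++ a ++ y) (x ++ b ++ y).
Proof.
unfold derives; induction 1 as [a' b' [a0 [a1 [M [g [HR [-> ->]]]]]]| a'|a' b' c' _ IH1 _ IH2].
- apply: rt_step. exists (x ++ a0), (a1 ++ y), M, g. split=>//. split; by rewrite -!catA.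
- exact: rt_refl.
- exact: rt_trans IH1 IH2.
Qed.
Lemma der_rule M g : R M g -> der [:: Nt M] g.
Proof. move=> H; apply: rt_step; exists [::], [::], M, g; by rewrite cats0. Qed.

Inductive drv : seq sym -> seq sym -> Prop :=
| drv_nil : drv [::] [::]
| drv_cons s a b c : drvs s b -> drv a c -> drv (s :: a) (b ++ c)
with drvs : sym -> seq sym -> Prop :=
| drvs_refl s : drvs s [:: s]
| drvs_rule M g b : R M g -> drv g b -> drvs (Nt M) b.
Scheme drv_ind2 := Induction for drv Sort Prop
with drvs_ind2 := Induction for drvs Sort Prop.

Lemma drv_refl a : drv a a.
Proof. elim: a => [|s a IH]; first exact: drv_nil.
exact: (drv_cons (drvs_refl s) IH). Qed.

Lemma drv_app a b a' b' : drv a b -> drv a' b' -> drv (a ++ a') (b ++ b').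
Proof. elim=> [//|s a0 b0 c0 Hs _ IH] H'. rewrite /= -catA. exact: drv_cons Hs (IH H'). Qed.

Lemma drv_der a b : drv a b -> der a b.
Proof.
move: a b.
apply (@drv_ind2 (fun (a b : seq sym) (_ : drv a b) => der a b) (fun (s : sym) (b : seq sym) (_ : drvs s b) => der [:: s] b)).
- exact: der_refl.
- move=> s a0 b0 c0 _ H1 _ H2.
  apply: (@der_trans _ (b0 ++ a0)).
  + have := der_ctx [::] a0 H1. by rewrite /=.
  + have := der_ctx b0 [::] H2. by rewrite !cats0.
- move=> s; exact: der_refl.
- move=> M g b0 HR _ H1. exact: der_trans (der_rule HR) H1.
Qed.

Lemma cat_split (A : Type) (b c b0 b1 : seq A) x :
  b ++ c = b0 ++ x :: b1 ->
  (exists b', b = b0 ++ x :: b' /\ b1 = b' ++ c) \/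
  (exists c0, c = c0 ++ x :: b1 /\ b0 = b ++ c0).
Proof.
elim: b0 b => [|y b0 IH] [|z b] /=.
- move=> ->; right; by exists [::].
- case=> -> <-; left; by exists b.
- move=> ->; right; by exists (y :: b0).
- case=> -> /IH [[b' [-> ->]]|[c0 [-> ->]]]; [left; by exists b' | right; by exists c0].
Qed.

Lemma drv_step a b c : drv a b -> derives1 R b c -> drv a c.
Proof.
move=> H [b0 [b1 [M [g [HR [Eb Ec]]]]]]. subst c.
move: a b H b0 b1 Eb.
apply (@drv_ind2 (fun (a b : seq sym) (_ : drv a b) => forall b0 b1, b = b0 ++ Nt M :: b1 -> drv a (b0 ++ g ++ b1))
                (fun (s : sym) (b : seq sym) (_ : drvs s b) => forall b0 b1, b = b0 ++ Nt M :: b1 -> drvs s (b0 ++ g ++ b1))).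
- by move=> b0 b1; case: b0.
- move=> s a0 b' c' Hs IHs Ha IHa b0 b1 E.
  case: (cat_split E) => [[b2 [E1 E2]]|[c0 [E1 E2]]].
  + rewrite E2 !catA -(catA (b0 ++ g)). have := drv_cons (IHs b0 b2 E1) Ha. by rewrite -!catA.
  + rewrite E2 -!catA. exact: drv_cons Hs (IHa c0 b1 E1).
- move=> s [|y b0] b1 /=; last by case=> _; case: b0.
  case=> -> <-. rewrite cats0. exact: drvs_rule HR (drv_refl g).
- move=> M0 g0 b' HR0 _ IH b0 b1 E. exact: drvs_rule HR0 (IH _ _ E).
Qed.

Lemma der_drv a b : der a b -> drv a b.
Proof.
move=> /clos_rt_rtn1_iff H. elim: H => [|y z Hyz _ IH]; first exact: drv_refl.
exact: drv_step IH Hyz.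
Qed.

Lemma lp_nil : lang_prefix R S [::].
Proof. exists [:: Nt S]; exact: der_refl. Qed.

Lemma lp_cat w1 w2 : lang_prefix R S (w1 ++ w2) -> lang_prefix R S w1.
Proof. case=> al H; exists (map Tm w2 ++ al). by rewrite catA -map_cat. Qed.

Inductive LC (V : nat -> tok -> Prop) (k : nat) : itm -> Prop :=
| lc_init al : R S al -> LC V k (S, [::], al, 0, 0)
| lc_pred M0 al M be i j ga : LC V k (M0, al, Nt M :: be, i, j) -> j <= k -> R M ga ->
    LC V k (M, [::], ga, j, j)
| lc_comp M0 al M be i j l ga : LC V k (M0, al, Nt M :: be, i, j) ->
    LC V k (M, ga, [::], j, l) -> l <= k ->
    LC V k (M0, rcons al (Nt M), be, i, l)
| lc_scan M0 al X be i j c : LC V k (M0, al, Tm X :: be, i, j) -> j <= k -> V j (X, c) ->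
    LC V k (M0, rcons al (Tm X), be, i, j + size c).

Lemma LC_mono (V V' : nat -> tok -> Prop) k k' it :
  (forall j x, V j x -> V' j x) -> k <= k' -> LC V k it -> LC V' k' it.
Proof.
move=> HV hk; elim=> {it}.
- move=> al h; exact: lc_init.
- move=> M0 al M be i j ga _ IH hj hr; apply: lc_pred IH _ hr; lia.
- move=> M0 al M be i j l ga _ IH1 _ IH2 hl; apply: lc_comp IH1 IH2 _; lia.
- move=> M0 al X be i j c _ IH hj hv; apply: lc_scan IH _ (HV _ _ hv); lia.
Qed.

Lemma LC_le V k it : LC V k it -> it.1.2 <= it.2.
Proof. elim=> //= *; lia. Qed.

Definition inv (V : nat -> tok -> Prop) (it : itm) : Prop :=
  match it with (N0, al, be, i, j) =>
    R N0 (al ++ be) /\ exists p0 p1 de, chainV V 0 p0 /\ chs p0 = i /\ chainV V i p1 /\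
      i + chs p1 = j /\ drv al (map Tm (terms p1)) /\
      der [:: Nt S] (map Tm (terms p0) ++ Nt N0 :: de)
  end.

Lemma LC_inv V k it : LC V k it -> inv V it.
Proof.
elim=> {it}.
- move=> al h /=; split=>//. exists [::], [::], [::]; do !split=>//.
  exact: drv_nil. exact: der_refl.
- move=> M0 al M be i j ga _ [HR [p0 [p1 [de [c0 [e0 [c1 [e1 [d1 d2]]]]]]]]] hj hr /=.
  split=>//. exists (p0 ++ p1), [::], (be ++ de). do !split=>//.
  + apply/chainV_cat; rewrite e0; tauto.
  + by rewrite chs_cat e0.
  + by rewrite chs_nil addn0.
  + exact: drv_nil.
  + apply: der_trans d2 _.
    apply: (@der_trans _ (map Tm (terms p0) ++ (al ++ Nt M :: be) ++ de)).
    * exact: der_ctx (der_rule HR).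
    * have := der_ctx (map Tm (terms p0)) (Nt M :: be ++ de) (drv_der d1).
      by rewrite /terms map_cat map_cat -!catA.
- move=> M0 al M be i j l ga _ [HR [p0 [p1 [de [c0 [e0 [c1 [e1 [d1 d2]]]]]]]]]
         _ [HR' [p0' [p2 [de' [c0' [e0' [c2 [e2 [d1' d2']]]]]]]]] hl /=.
  split; first by rewrite cat_rcons.
  exists p0, (p1 ++ p2), de; do !split=>//.
  + apply/chainV_cat; rewrite e1; tauto.
  + by rewrite chs_cat addnA e1.
  + rewrite -cats1 /terms map_cat map_cat. apply: drv_app d1 _.
    rewrite -(cats0 (map Tm (map fst p2))). apply: drv_cons drv_nil.
    rewrite cats0 in HR'. exact: drvs_rule HR' d1'.
- move=> M0 al X be i j c _ [HR [p0 [p1 [de [c0 [e0 [c1 [e1 [d1 d2]]]]]]]]] hj hv /=.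
  split; first by rewrite cat_rcons.
  exists p0, (rcons p1 (X, c)), de; do !split=>//.
  + apply/chainV_rcons; rewrite e1; tauto.
  + by rewrite chs_rcons addnA e1.
  + rewrite -!cats1 /terms map_cat map_cat /=. apply: drv_app d1 (drv_refl _).
Qed.


Lemma map_split (b c : seq sym) (q : seq tok) : b ++ c = map Tm (terms q) ->
  exists q1 q2, q = q1 ++ q2 /\ b = map Tm (terms q1) /\ c = map Tm (terms q2).
Proof.
rewrite /terms; elim: b q => [|y b IH] q /=.
- move=> ->; by exists [::], q.
- case: q => [|x q] //= [-> /IH [q1 [q2 [-> [-> ->]]]]]. by exists (x :: q1), q2.
Qed.

Lemma map_split2 (b c : seq sym) (q : seq tok) X' ga :
  b ++ c = map Tm (terms q) ++ X' :: ga ->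
  (exists q1 q2, q = q1 ++ q2 /\ b = map Tm (terms q1) /\ c = map Tm (terms q2) ++ X' :: ga) \/
  (exists ga1, b = map Tm (terms q) ++ X' :: ga1 /\ ga = ga1 ++ c).
Proof.
rewrite /terms; elim: q b => [|x q IH] [|y b] /=.
- move=> ->; left; by exists [::], [::].
- case=> -> <-; right; by exists b.
- move=> ->; left; by exists [::], (x :: q).
- case=> -> /IH [[q1 [q2 [-> [-> ->]]]]|[ga1 [-> ->]]].
  + left; by exists (x :: q1), q2.
  + right; by exists ga1.
Qed.

Lemma FC V k be w : drv be w -> forall q N0 al be' i j, w = map Tm (terms q) ->
  LC V k (N0, al, be ++ be', i, j) -> chainV V j q -> j + chs q <= k ->
  LC V k (N0, al ++ be, be', i, j + chs q).
Proof.
move: be w.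
apply (@drv_ind2
  (fun (be w : seq sym) (_ : drv be w) => forall q N0 al be' i j, w = map Tm (terms q) ->
    LC V k (N0, al, be ++ be', i, j) -> chainV V j q -> j + chs q <= k ->
    LC V k (N0, al ++ be, be', i, j + chs q))
  (fun (s : sym) (w : seq sym) (_ : drvs s w) => forall q N0 al be i j, w = map Tm (terms q) ->
    LC V k (N0, al, s :: be, i, j) -> chainV V j q -> j + chs q <= k ->
    LC V k (N0, rcons al s, be, i, j + chs q))).
- move=> [|x q] //= N0 al be' i j _ H _ _. by rewrite cats0 chs_nil addn0.
- move=> s a b c Hs IHs Ha IHa q N0 al be' i j E H ch hk.
  case: (map_split E) => [q1 [q2 [Eq [Eb Ec]]]]. subst q.
  move/chainV_cat: ch => [ch1 ch2]. rewrite chs_cat in hk.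
  have H1 := IHs q1 N0 al (a ++ be') i j Eb H ch1 ltac:(lia).
  have H2 := IHa q2 N0 (rcons al s) be' i (j + chs q1) Ec H1 ch2 ltac:(lia).
  by rewrite chs_cat addnA -cat_rcons.
- move=> s [|[X c] [|y q]] //= N0 al be i j.
  case=> -> H [hv _] hk. rewrite chs_cons chs_nil addn0 /=.
  rewrite chs_cons chs_nil addn0 /= in hk.
  apply: lc_scan H _ hv. lia.
- move=> M g b HR Hd IH q N0 al be i j E H ch hk.
  have P := lc_pred H ltac:(lia) HR.
  have P' := IH q M [::] [::] j j E ltac:(by rewrite cats0) ch hk.
  exact: lc_comp H P' hk.
Qed.

Lemma pref V k be w : drv be w -> forall q X ga N0 al i j,
  w = map Tm (terms q) ++ Tm X :: ga ->
  LC V k (N0, al, be, i, j) -> chainV V j q -> j + chs q = k ->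
  exists M0 al' be' i', LC V k (M0, al', Tm X :: be', i', k).
Proof.
move: be w.
apply (@drv_ind2
  (fun (be w : seq sym) (_ : drv be w) => forall q X ga N0 al i j,
    w = map Tm (terms q) ++ Tm X :: ga ->
    LC V k (N0, al, be, i, j) -> chainV V j q -> j + chs q = k ->
    exists M0 al' be' i', LC V k (M0, al', Tm X :: be', i', k))
  (fun (s : sym) (w : seq sym) (_ : drvs s w) => forall q X ga N0 al be i j,
    w = map Tm (terms q) ++ Tm X :: ga ->
    LC V k (N0, al, s :: be, i, j) -> chainV V j q -> j + chs q = k ->
    exists M0 al' be' i', LC V k (M0, al', Tm X :: be', i', k))).
- by move=> [|x q].
- move=> s a b c Hs IHs Ha IHa q X ga N0 al i j E H ch hk.
  case: (map_split2 E) => [[q1 [q2 [Eq [Eb Ec]]]]|[ga1 [Eb Ega]]].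
  + subst q. move/chainV_cat: ch => [ch1 ch2]. rewrite chs_cat in hk.
    have H1 : LC V k (N0, rcons al s, a, i, j + chs q1).
    { have Hs' : drv [:: s] b by rewrite -(cats0 b); exact: drv_cons Hs drv_nil.
      have := FC Hs' Eb (H : LC V k (N0, al, [:: s] ++ a, i, j)) ch1 ltac:(lia).
      by rewrite cats1. }
    exact: IHa q2 X ga N0 (rcons al s) i (j + chs q1) Ec H1 ch2 ltac:(lia).
  + exact: IHs q X ga1 N0 al a i j Eb H ch hk.
- move=> s [|x q] X ga N0 al be i j; rewrite /terms /=.
  + case=> -> _ H _ hk. rewrite chs_nil addn0 in hk; subst k. by exists N0, al, be, i.
  + by case=> _; case: q.
- move=> M g b HR Hd IH q X ga N0 al be i j E H ch hk.
  have P := lc_pred H ltac:(lia) HR.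
  exact: (IH q X ga M [::] j j E P ch hk).
Qed.

Lemma drv_single s w : drv [:: s] w -> drvs s w.
Proof. move=> H; inversion H; subst. inversion H4; subst. by rewrite cats0. Qed.

Lemma drvs_nt M w : drvs (Nt M) w -> w = [:: Nt M] \/ exists g, R M g /\ drv g w.
Proof. move=> H; inversion H; subst; [left | right; exists g]; by []. Qed.

Lemma coreA V k X :
  (exists N0 al be i, LC V k (N0, al, Tm X :: be, i, k)) <->
  (exists p, chainV V 0 p /\ lang_prefix R S (terms p) /\ chs p = k /\
     lang_prefix R S (terms p ++ [:: X])).
Proof.
split.
- move=> [N0 [al [be [i H]]]].
  case: (LC_inv H) => HR [p0 [p1 [de [c0 [e0 [c1 [e1 [d1 d2]]]]]]]].
  have lp2 : lang_prefix R S (terms (p0 ++ p1) ++ [:: X]).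
  { exists (be ++ de).
    apply: der_trans d2 _.
    have h1 := der_ctx (map Tm (terms p0)) de (der_rule HR).
    have h2 := der_ctx (map Tm (terms p0)) (Tm X :: be ++ de) (drv_der d1).
    rewrite /= -!catA /= in h1.
    have e : map Tm (terms (p0 ++ p1) ++ [:: X]) ++ be ++ de =
             map Tm (terms p0) ++ map Tm (terms p1) ++ Tm X :: be ++ de.
    { by rewrite /terms !map_cat -!catA. }
    rewrite e. exact: der_trans h1 h2. }
  exists (p0 ++ p1); split; [|split; [exact: lp_cat lp2|split=>//]].
  + apply/chainV_cat; rewrite e0; tauto.
  + by rewrite chs_cat e0.
- move=> [p [ch [_ [hk [al Hal]]]]].
  move/der_drv/drv_single/drvs_nt: Hal => [|[g [HR Hg]]].
  + rewrite /terms map_cat; by case: p {ch hk}.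
  + apply: (pref Hg (q := p) (X := X) (ga := al)) (lc_init V k HR) ch _.
    * by rewrite /terms map_cat -catA.
    * by rewrite add0n.
Qed.

Lemma coreB V n :
  (exists al, LC V n (S, al, [::], 0, n)) <->
  (exists p, chainV V 0 p /\ lang_prefix R S (terms p) /\ chs p = n /\ lang R S (terms p)).
Proof.
split.
- move=> [al H].
  case: (LC_inv H) => HR [p0 [p1 [de [c0 [e0 [c1 [e1 [d1 d2]]]]]]]].
  rewrite cats0 in HR. rewrite add0n in e1.
  have hl : lang R S (terms p1) by exact: der_trans (der_rule HR) (drv_der d1).
  exists p1; do !split=>//. exists [::]; by rewrite cats0.
- move=> [p [ch [_ [hk Hl]]]].
  move/der_drv/drv_single/drvs_nt: Hl => [|[g [HR Hg]]].
  + by case: p {ch hk}.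
  + exists g. have H0 : LC V n (S, [::], g ++ [::], 0, 0) by rewrite cats0; exact: lc_init.
    have := FC Hg (erefl _) H0 ch ltac:(lia).
    by rewrite add0n hk.
Qed.

End G.

Section St.
Variables (N T Sigma : Type) (R : N -> seq (symbol N T) -> Prop) (S : N)
  (Lex : @lexer T Sigma) (Sel : @selector T Sigma) (D : seq Sigma).
Hypothesis HSel : is_selector Sel.
Local Notation tok := (T * seq Sigma)%type.
Local Notation sym := (symbol N T).
Local Notation itm := (N * seq sym * seq sym * nat * nat)%type.
Local Notation lp := (lang_prefix R S).
Local Notation piS := (@Defs.pi N T Sigma R).
Local Notation ScanS := (@Defs.Scan N T Sigma).

Definition ZZ k u : tok -> Prop :=
  (iter u (ll_step R S Lex Sel D k) (fun _ => False, P0 R S Lex Sel D k)).1.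
Definition PP k u : seq tok -> Prop := Pu R S Lex Sel D k u.

Lemma ZZS k u : ZZ k u.+1 = Sel (ZZ k u) (Wk R S Lex D k (PP k u)).
Proof. reflexivity. Qed.
Lemma PPS k u : PP k u.+1 = limit (Append R S k (ZZ k u.+1)) (PP k u).
Proof. reflexivity. Qed.
Lemma PPk k p : PP k.+1 0 p <-> exists u, PP k u p.
Proof. reflexivity. Qed.

Lemma PP_u k u p : PP k u p -> PP k u.+1 p.
Proof. rewrite PPS => h; by exists 0. Qed.
Lemma PP_uu k u u' p : u <= u' -> PP k u p -> PP k u' p.
Proof.
move=> h; rewrite -(subnKC h); elim: (u' - u) => [|d IH]; first by rewrite addn0.
move=> /IH; rewrite addnS; exact: PP_u.
Qed.
Lemma PP_kk k u k' u' p : k < k' -> PP k u p -> PP k' u' p.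
Proof.
move=> h H. have H1 : PP k.+1 0 p by apply/PPk; exists u.
have H2 : PP k' 0 p.
{ rewrite -(subnKC h). elim: (k' - k.+1) => [|d IH]; first by rewrite addn0.
  rewrite addnS; apply/PPk; by exists 0. }
exact: PP_uu H2.
Qed.

Lemma W_mono k (P P' : seq tok -> Prop) x :
  (forall p, P p -> P' p) -> Wk R S Lex D k P x -> Wk R S Lex D k P' x.
Proof. move=> h [h1 [p [hp h2]]]; split=>//; exists p; split; auto. Qed.

Lemma ZZ_W k u x : ZZ k u x -> Wk R S Lex D k (PP k u) x.
Proof.
elim: u x => [//|u IH] x; rewrite ZZS => h.
have := (HSel IH).2 x h. apply: W_mono. exact: PP_u.
Qed.
Lemma ZZ_u k u x : ZZ k u x -> ZZ k u.+1 x.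
Proof. rewrite ZZS. exact: (HSel (@ZZ_W k u)).1. Qed.
Lemma ZZ_uu k u u' x : u <= u' -> ZZ k u x -> ZZ k u' x.
Proof.
move=> h; rewrite -(subnKC h); elim: (u' - u) => [|d IH]; first by rewrite addn0.
move=> /IH; rewrite addnS; exact: ZZ_u.
Qed.

Definition VZ k u j x := (j < k /\ exists u', ZZ j u' x) \/ (j = k /\ ZZ k u x).
Lemma VZ_uu k u u' j x : u <= u' -> VZ k u j x -> VZ k u' j x.
Proof. move=> h [h1|[h1 h2]]; [left|right; split=>//; exact: ZZ_uu h2]; done. Qed.
Lemma VZ_k k u j x : VZ k u j x -> VZ k.+1 0 j x.
Proof. move=> [[h1 h2]|[-> h2]]; left; split=>//; [lia| by exists u]. Qed.

Lemma CP k u p : PP k u p <-> chainV (VZ k u) 0 p /\ lp (terms p).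
Proof.
have step : forall k, (forall p, PP k 0 p <-> chainV (VZ k 0) 0 p /\ lp (terms p)) ->
    forall u p, PP k u p <-> chainV (VZ k u) 0 p /\ lp (terms p).
{ move=> {}k base; elim=> [//|{}u IHu] {}p. split.
  - rewrite PPS => [[n Hn]]. elim: n p Hn => [|n IHn] {}p /=.
    + move/IHu => [ch hl]. split=>//. apply: chainV_mono ch => j x; apply: VZ_uu; lia.
    + case=> [/IHn //|[p' [t [Hp' [hs [hz [hlp ->]]]]]]].
      have [ch _] := IHn p' Hp'. split=>//. apply/chainV_rcons; split=>//.
      right; split=>//.
  - move=> [ch hl]. elim/last_ind: p ch hl => [|p' t IHp] ch hl.
    + apply: (@PP_uu k 0); first by []. apply/base; split=>//; exact: lp_nil.
    + move/chainV_rcons: ch => [ch' hv].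
      have hl' : lp (terms p').
      { apply: (@lp_cat _ _ _ _ _ [:: t.1]). move: hl. by rewrite -cats1 /terms /= map_cat. }
      rewrite add0n in hv. case: hv => [[hlt [u' hz]]|[heq hz]].
      * apply: (@PP_uu k 0); first by []. apply/base; split=>//.
        apply/chainV_rcons; split.
        -- apply: (@chainV_restrict _ _ (VZ k u.+1) _ _ _ (chs p')) ch' => //.
           move=> j' x hj' [[h1 h2]|[h1 h2]]; [left; split=>//|]; lia.
        -- left; rewrite add0n; split=>//; by exists u'.
      * have [n Hn] := IHp ch' hl'.
        rewrite PPS; exists n.+1 => /=. right; exists p', t; do !split=>//. }
elim: k u p => [|k IHk]; apply: step => p.
- split.
  + move=> -> /=; split=>//; exact: lp_nil.
  + case: p => [|x p] //= [[[[h1 _]|[_ h2]] _] _] //.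
- rewrite PPk; split.
  + move=> [u /IHk [ch hl]]; split=>//. apply: chainV_mono ch => j x; exact: VZ_k.
  + move=> [ch hl].
    have ch1 : chainV (fun j x => exists u, VZ k u j x) 0 p.
    { apply: chainV_mono ch => j x [[h1 [u' h2]]|[h1 h2]] //.
      case: (ltngtP j k) => [hjk|hjk|hjk].
      - exists 0; left; split=>//; by exists u'.
      - lia.
      - subst j; exists u'; right; by split. }
    have [u ch2] := chainV_stage (@VZ_uu k) ch1.
    exists u; apply/IHk; by split.
Qed.

Definition TT k u : tok -> Prop :=
  (iter u (earley_step R Lex Sel D k) (fun _ => False, J0 R S Lex Sel D k)).1.
Definition JJ k u : itm -> Prop := Ju R S Lex Sel D k u.
Definition J0src k : itm -> Prop :=
  match k with 0 => Init R S | k'.+1 => Ik R S Lex Sel D k' end.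

Lemma TTS k u : TT k u.+1 = Tokens Lex Sel D (TT k u) k (JJ k u).
Proof. reflexivity. Qed.
Lemma JJS k u : JJ k u.+1 = piS k (TT k u.+1) (JJ k u).
Proof. reflexivity. Qed.
Lemma JJ0 k : JJ k 0 = piS k (fun _ => False) (J0src k).
Proof. by case: k. Qed.
Lemma Ik_JJ k it : Ik R S Lex Sel D k it <-> exists u, JJ k u it.
Proof. reflexivity. Qed.

Section PiLemmas.
Variables (k : nat) (Tk : tok -> Prop) (I : itm -> Prop).
Local Notation f := (fun J => ScanS Tk k (Complete k (Predict R k J))).

Lemma f_infl (J : itm -> Prop) it : J it -> f J it.
Proof. by move=> h; left; left; left. Qed.
Lemma iter_le n m it : n <= m -> iter n f I it -> iter m f I it.
Proof.
move=> h; rewrite -(subnKC h); elim: (m - n) => [|d IH]; first by rewrite addn0.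
move=> /IH; rewrite addnS /=; exact: f_infl.
Qed.
Lemma pi_incl it : I it -> piS k Tk I it.
Proof. by exists 0. Qed.
Lemma pi_pred it : Predict R k (piS k Tk I) it -> piS k Tk I it.
Proof.
case=> [//|[M0 [al [M [be [i [ga [[n hn] [hr ->]]]]]]]]].
exists n.+1 => /=. left; left; right. by exists M0, al, M, be, i, ga.
Qed.
Lemma pi_comp it : Complete k (piS k Tk I) it -> piS k Tk I it.
Proof.
case=> [//|[M0 [al [M [be [i [j [ga [[n1 h1] [[n2 h2] ->]]]]]]]]]].
exists (maxn n1 n2).+1 => /=. left; right.
exists M0, al, M, be, i, j, ga; split; [|split=>//]; left.
- apply: (iter_le (n := n1)) => //; lia.
- apply: (iter_le (n := n2)) => //; lia.
Qed.
Lemma pi_scan it : ScanS Tk k (piS k Tk I) it -> piS k Tk I it.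
Proof.
case=> [//|[X [c [M0 [al [be [i [hT [[n hn] ->]]]]]]]]].
exists n.+1 => /=. right. exists X, c, M0, al, be, i; do !split=>//. by left; left.
Qed.
Lemma pi_src it : piS k Tk I it -> I it \/ k <= it.2.
Proof.
case=> n; elim: n it => [|n IH] it /=; first by left.
case=> [[[/IH //|]|]|].
- by move=> [M0 [al [M [be [i [ga [_ [_ ->]]]]]]]]; right.
- by move=> [M0 [al [M [be [i [j [ga [_ [_ ->]]]]]]]]]; right.
- move=> [X [c [M0 [al [be [i [_ [_ ->]]]]]]]]; right => /=; lia.
Qed.
Lemma pi_LC V k' : k = k' -> (forall it, I it -> LC R S V k' it) -> (forall x, Tk x -> V k' x) ->
  forall it, piS k Tk I it -> LC R S V k' it.
Proof.
move=> <- hI hT it [n]; elim: n it => [|n IH] it /=; first exact: hI.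
have hP : forall it, Predict R k (iter n f I) it -> LC R S V k it.
{ move=> it' [/IH //|[M0 [al [M [be [i [ga [h1 [h2 ->]]]]]]]]].
  apply: lc_pred (IH _ h1) _ h2; lia. }
have hC : forall it, Complete k (Predict R k (iter n f I)) it -> LC R S V k it.
{ move=> it' [/hP //|[M0 [al [M [be [i [j [ga [h1 [h2 ->]]]]]]]]]].
  apply: lc_comp (hP _ h1) (hP _ h2) _; lia. }
case=> [/hC //|[X [c [M0 [al [be [i [h1 [h2 ->]]]]]]]]].
apply: lc_scan (hC _ h2) _ (hT _ h1); lia.
Qed.
End PiLemmas.

Lemma JJ_pi k u : exists I, JJ k u = piS k (TT k u) I.
Proof. case: u => [|u]; [exists (J0src k); exact: JJ0 | exists (JJ k u); exact: JJS]. Qed.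
Lemma JJ_pred k u it : Predict R k (JJ k u) it -> JJ k u it.
Proof. have [I ->] := JJ_pi k u; exact: pi_pred. Qed.
Lemma JJ_comp k u it : Complete k (JJ k u) it -> JJ k u it.
Proof. have [I ->] := JJ_pi k u; exact: pi_comp. Qed.
Lemma JJ_scan k u it : ScanS (TT k u) k (JJ k u) it -> JJ k u it.
Proof. have [I ->] := JJ_pi k u; exact: pi_scan. Qed.

Lemma JJ_u k u it : JJ k u it -> JJ k u.+1 it.
Proof. rewrite JJS; exact: pi_incl. Qed.
Lemma JJ_uu k u u' it : u <= u' -> JJ k u it -> JJ k u' it.
Proof.
move=> h; rewrite -(subnKC h); elim: (u' - u) => [|d IH]; first by rewrite addn0.
move=> /IH; rewrite addnS; exact: JJ_u.
Qed.
Lemma JJ_k k u it : JJ k u it -> JJ k.+1 0 it.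
Proof. move=> h; rewrite JJ0; apply: pi_incl => /=; by exists u. Qed.
Lemma JJ_kk k u k' u' it : k < k' -> JJ k u it -> JJ k' u' it.
Proof.
move=> h H. have H1 := JJ_k H.
have H2 : JJ k' 0 it.
{ rewrite -(subnKC h). elim: (k' - k.+1) => [|d IH]; first by rewrite addn0.
  rewrite addnS; exact: JJ_k IH. }
exact: JJ_uu H2.
Qed.

Definition cand k (J : itm -> Prop) (x : tok) :=
  exists X M0 al be i, J (M0, al, Tm X :: be, i, k) /\ Lex X D k x.

Lemma TT_J k u x : TT k u x -> cand k (JJ k u) x.
Proof.
elim: u x => [//|u IH] x; rewrite TTS /Tokens => h.
have := (HSel (B := cand k (JJ k u)) IH).2 x h.
move=> [X [M0 [al [be [i [h1 h2]]]]]]. exists X, M0, al, be, i; split=>//. exact: JJ_u.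
Qed.
Lemma TT_u k u x : TT k u x -> TT k u.+1 x.
Proof. rewrite TTS /Tokens. exact: (HSel (B := cand k (JJ k u)) (@TT_J k u)).1. Qed.
Lemma TT_uu k u u' x : u <= u' -> TT k u x -> TT k u' x.
Proof.
move=> h; rewrite -(subnKC h); elim: (u' - u) => [|d IH]; first by rewrite addn0.
move=> /IH; rewrite addnS; exact: TT_u.
Qed.

Lemma JJ_src k u it : JJ k u it -> k <= it.2 \/ (exists k', k = k'.+1 /\ Ik R S Lex Sel D k' it).
Proof.
elim: u it => [|u IH] it.
- rewrite JJ0 => /pi_src [|//]; last by left.
  case: k => [|k] /= h; [by left | right; by exists k].
- rewrite JJS => /pi_src [/IH //|]; by left.
Qed.

Lemma Loc k u it : JJ k u it -> it.2 < k -> Ik R S Lex Sel D it.2 it.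
Proof.
elim: k u it => [|k IH] u it H hlt; first by [].
case: (JJ_src H) => [|[k' [[<-] [u' hu']]]]; first lia.
case: (ltngtP it.2 k) => [hl|hl|hl].
- exact: IH hu' hl.
- lia.
- by rewrite hl; exists u'.
Qed.

Definition VT k u j x := (j < k /\ exists u', TT j u' x) \/ (j = k /\ TT k u x).
Lemma VT_uu k u u' j x : u <= u' -> VT k u j x -> VT k u' j x.
Proof. move=> h [h1|[h1 h2]]; [left|right; split=>//; exact: TT_uu h2]; done. Qed.
Lemma VT_k k u j x : VT k u j x -> VT k.+1 0 j x.
Proof. move=> [[h1 h2]|[-> h2]]; left; split=>//; [lia| by exists u]. Qed.

Lemma CJ1 k u it : JJ k u it -> LC R S (VT k u) k it.
Proof.
elim: k u it => [|k IHk] u it.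
- elim: u it => [|u IHu] it.
  + rewrite JJ0; apply: pi_LC => // it' [al [h ->]]; exact: lc_init.
  + rewrite JJS; apply: pi_LC => // [it' /IHu|x h]; last by right.
    apply: LC_mono => //; move=> j x; apply: VT_uu; lia.
- elim: u it => [|u IHu] it.
  + rewrite JJ0; apply: pi_LC => // it' [u' /IHk].
    apply: LC_mono => //; move=> j x; exact: VT_k.
  + rewrite JJS; apply: pi_LC => // [it' /IHu|x h]; last by right.
    apply: LC_mono => //; move=> j x; apply: VT_uu; lia.
Qed.

Lemma JJ_at k u it : JJ k u it -> it.2 <= k ->
  (it.2 = k) \/ (it.2 < k /\ exists u', JJ it.2 u' it).
Proof.
move=> H hl; case: (ltngtP it.2 k) => [hlt|hlt|hlt]; last by left.
- right; split=>//; exact: Loc H hlt.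
- lia.
Qed.

Lemma CJ2 k u it : LC R S (VT k u) k it -> JJ k u it.
Proof.
elim=> {it}.
- move=> al h. have H : JJ 0 0 (S, [::], al, 0, 0).
  { rewrite JJ0; apply: pi_incl; by exists al. }
  case: k => [|k]; [exact: JJ_uu H | exact: JJ_kk H].
- move=> M0 al M be i j ga _ IH hj hr.
  case: (JJ_at IH hj) => /= [hjk|[hlt [u' h]]].
  + subst j; apply: JJ_pred; right; by exists M0, al, M, be, i, ga.
  + apply: (JJ_kk (k := j) (u := u')) => //. apply: JJ_pred; right; by exists M0, al, M, be, i, ga.
- move=> M0 al M be i j l ga H1 IH1 H2 IH2 hl.
  have hjl := LC_le H2. rewrite /= in hjl.
  case: (JJ_at IH2 hl) => /= [hlk|[hlt [u2 h2]]].
  + subst l; apply: JJ_comp; right; by exists M0, al, M, be, i, j, ga.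
  + have [u1 h1] : exists u1, JJ l u1 (M0, al, Nt M :: be, i, j).
    { case: (ltngtP j l) => [hjl'|hjl'|hjl']; last subst j.
      - exists 0. have := Loc IH1 ltac:(rewrite /=; lia). case=> u3 h3. exact: JJ_kk h3.
      - lia.
      - have := Loc IH1 ltac:(rewrite /=; lia). case=> u3 h3. by exists u3. }
    apply: (JJ_kk (k := l) (u := maxn u1 u2)) => //.
    apply: JJ_comp; right; exists M0, al, M, be, i, j, ga; split; [|split=>//].
    * apply: JJ_uu h1; lia.
    * apply: JJ_uu h2; lia.
- move=> M0 al X be i j c _ IH hj [[hlt [u' hT]]|[hjk hT]].
  + have [u1 h1] := Loc IH ltac:(rewrite /=; lia).
    apply: (JJ_kk (k := j) (u := maxn u1 u')) => //.
    apply: JJ_scan; right; exists X, c, M0, al, be, i; do !split=>//.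
    * apply: TT_uu hT; lia.
    * apply: JJ_uu h1; lia.
  + subst j. apply: JJ_scan; right; exists X, c, M0, al, be, i; do !split=>//.
Qed.

End St.

Section Fin.
Variables (N T Sigma : Type) (R : N -> seq (symbol N T) -> Prop) (S : N)
  (Lex : @lexer T Sigma) (Sel : @selector T Sigma) (D : seq Sigma).
Hypothesis HSel : is_selector Sel.
Hypothesis HLex : is_lexer Lex.
Local Notation sym := (symbol N T).
Local Notation ZZ := (ZZ R S Lex Sel D).
Local Notation TT := (TT R S Lex Sel D).
Local Notation PP := (PP R S Lex Sel D).
Local Notation JJ := (JJ R S Lex Sel D).
Local Notation VZ := (VZ R S Lex Sel D).
Local Notation VT := (VT R S Lex Sel D).
Local Notation CPf := (@CP N T Sigma R S Lex Sel D HSel).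

Lemma Wk_cand k u (hk : k <= size D)
  (IHj : forall j, j < k -> forall u x, ZZ j u x <-> TT j u x)
  (IHu : forall x, ZZ k u x <-> TT k u x) x :
  Wk R S Lex D k (PP k u) x <-> cand Lex D k (JJ k u) x.
Proof.
have hV : forall j y, VZ k u j y -> VT k u j y.
{ move=> j y [[h1 [u' h2]]|[h1 h2]].
  - left; split=>//; exists u'; exact/(IHj j h1).
  - right; split=>//; exact/IHu. }
have hV' : forall j y, VT k u j y -> VZ k u j y.
{ move=> j y [[h1 [u' h2]]|[h1 h2]].
  - left; split=>//; exists u'; exact/(IHj j h1).
  - right; split=>//; exact/IHu. }
split.
- move=> [hx [p [hp [hs hl]]]].
  have [ch hlp] := (CPf k u p).1 hp.
  have ch' : chainV (VT k u) 0 p by apply: chainV_mono ch.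
  have : exists N0 al be i, LC R S (VT k u) k (N0, al, Tm x.1 :: be, i, k).
  { apply/coreA. exists p; do !split=>//. move: hl; by rewrite -cats1 /terms map_cat. }
  move=> [N0 [al [be [i H]]]]. exists x.1, N0, al, be, i; split=>//. exact: CJ2 H.
- move=> [X [N0 [al [be [i [H hx]]]]]].
  have [hX _] := HLex hk hx.
  have H' := CJ1 HSel H.
  have [p [ch [hlp [hs hl]]]] : exists p, chainV (VT k u) 0 p /\ lang_prefix R S (terms p) /\
     chs p = k /\ lang_prefix R S (terms p ++ [:: X]).
  { apply/coreA. by exists N0, al, be, i. }
  split; first by rewrite /Xk hX.
  exists p; split.
  + apply/CPf; split=>//. exact: chainV_mono ch.
  + split=>//. move: hl; by rewrite -cats1 /terms map_cat /= hX.
Qed.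

Lemma Main k : k <= size D -> forall u x, ZZ k u x <-> TT k u x.
Proof.
elim/ltn_ind: k => k IHk hk.
have IHj : forall j, j < k -> forall u x, ZZ j u x <-> TT j u x.
{ move=> j hj; apply: IHk => //; lia. }
elim=> [|u IHu] x; first by split.
rewrite ZZS TTS /Tokens.
have e1 : ZZ k u = TT k u.
{ apply: functional_extensionality => y; apply: propositional_extensionality; exact: IHu. }
have e2 : Wk R S Lex D k (PP k u) = cand Lex D k (JJ k u).
{ apply: functional_extensionality => y; apply: propositional_extensionality.
  exact: Wk_cand. }
rewrite e1 e2. by [].
Qed.

Lemma final : (exists p, ll R S Lex Sel D p) <->
  (exists al, frakI R S Lex Sel D (S, al, [::], 0, size D)).
Proof.
set n := size D.
have hV : forall j y, VZ n.+1 0 j y -> VT n.+1 0 j y.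
{ move=> j y [[h1 [u' h2]]|[h1 h2]] //. left; split=>//; exists u'; apply/Main => //; lia. }
have hV' : forall j y, VT n.+1 0 j y -> VZ n.+1 0 j y.
{ move=> j y [[h1 [u' h2]]|[h1 h2]] //. left; split=>//; exists u'; apply/Main => //; lia. }
split.
- move=> [p [hP [hs hl]]].
  have hP' : PP n.+1 0 p := hP.
  have [ch hlp] := (CPf n.+1 0 p).1 hP'.
  have [al Hal] : exists al, LC R S (VT n.+1 0) n (S, al, [::], 0, n).
  { apply/coreB. exists p; do !split=>//. exact: chainV_mono ch. }
  exists al.
  have H1 : LC R S (VT n.+1 0) n.+1 (S, al, [::], 0, n) by apply: LC_mono Hal.
  have := Loc (CJ2 HSel H1) (ltnSn n : (S, al, [::], 0, n).2 < n.+1).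
  by [].
- move=> [al [u H]].
  have H1 := CJ1 HSel (H : JJ n u (S, al, [::], 0, n)).
  have H2 : LC R S (VT n.+1 0) n (S, al, [::], 0, n).
  { apply: LC_mono H1 => //; move=> j y; exact: VT_k. }
  have [p [ch [hlp [hs hl]]]] := (coreB R S (VT n.+1 0) n).1 (ex_intro _ al H2).
  exists p; split; last by split.
  have : PP n.+1 0 p by apply/CPf; split=>//; exact: chainV_mono ch.
  by [].
Qed.

End Fin.

Theorem theorem2 (N T Sigma : Type) (R : N -> seq (symbol N T) -> Prop) (S : N)
    (Lex : @lexer T Sigma) (Sel : @selector T Sigma) (D : seq Sigma) :
  is_lexer Lex -> is_selector Sel ->
  ((exists p, ll R S Lex Sel D p) <->
   (exists alpha, frakI R S Lex Sel D (S, alpha, [::], 0, size D))).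
Proof. move=> hl hs. exact: final hs hl. Qed.
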